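(* For $n\geqslant 3$, $\det(M_n)=(-1)^{n-3}(n-2)^{n-2}(n^2-5n+5)$. In particular, the matrix $M_n$ is non-degenerate.
   Context: Write a permutation $\pi$ of $\{1,\ldots,n\}$ as $[\pi_1\ldots\pi_n]$ with $\pi_j=\pi(j)$. For $i\in\{2,\ldots,n\}$ and $k\in\{3,\ldots,n\}$, define $f_i^{2,k}:\mathrm{Sym}_n\to\mathbb{R}$ by $f_i^{2,k}(\pi)=1$ if $\pi_2=i$, $-1$ if $\pi_k=i$, and $0$ otherwise. For distinct $r,s\in\{2,\ldots,n\}$, $(1\,r\,s)$ denotes the $3$-cycle mapping $1\mapsto r$, $r\mapsto s$, $s\mapsto 1$. $M_n$ is the $(n-1)(n-2)\times(n-1)(n-2)$ matrix whose entry in row $f$ and column $\pi$ is $f(\pi)$, with rows and columns ordered as follows. Rows are in $n-1$ consecutive cohorts indexed by $i=2,3,\ldots,n$: cohort $i=2$ is $f_2^{2,3},f_2^{2,4},\ldots,f_2^{2,n}$; for $i\ge3$, cohort $i$ is $f_i^{2,i}$ followed by the $f_i^{2,k}$ with $k\in\{3,\ldots,n\}\setminus\{i\}$ in increasing order of $k$. Columns are in $n-1$ consecutive blocks indexed by $s=2,3,\ldots,n$: block $s$ is $(1\,r\,s)$ for $r\in\{2,\ldots,n\}\setminus\{s\}$ in increasing order of $r$. *)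

(* Defs.v *)
From mathcomp Require Import all_boot all_order all_algebra.
Set Implicit Arguments. Unset Strict Implicit. Unset Printing Implicit Defensive.
Import GRing.Theory Num.Theory.
Local Open Scope ring_scope.

(* Points of {1,...,n} are represented by natural numbers (1-based, as in the
   paper); a permutation pi is represented by its action j |-> pi j on nat. *)

Definition f_fun (i k : nat) (pi : nat -> nat) : int :=
  if pi 2%N == i then 1 else if pi k == i then -1 else 0.

Definition cyc3 (r s : nat) : nat -> nat :=
  fun j => if j == 1%N then r else if j == r then s else if j == s then 1%N else j.

(* Row labels (i,k) of M_n, in the paper's order. *)
Definition Mrows (n : nat) : seq (nat * nat) :=
  [seq (2%N, k) | k <- iota 3 (n - 2)] ++
  flatten [seq (i, i) :: [seq (i, k) | k <- iota 3 (n - 2) & k != i]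
          | i <- iota 3 (n - 2)].

(* Column labels (r,s) of M_n (the 3-cycle (1 r s)), in the paper's order. *)
Definition Mcols (n : nat) : seq (nat * nat) :=
  flatten [seq [seq (r, s) | r <- iota 2 (n - 1) & r != s] | s <- iota 2 (n - 1)].

Definition Mn (n : nat) : 'M[int]_((n - 1) * (n - 2)) :=
  \matrix_(a, b)
    (let rk := nth (0%N, 0%N) (Mrows n) a in
     let rs := nth (0%N, 0%N) (Mcols n) b in
     f_fun rk.1 rk.2 (cyc3 rs.1 rs.2)).

(* Main.v *)
Require Import Defs.
From mathcomp Require Import all_boot all_order all_algebra all_fingroup zify ring lra.
Import GRing.Theory Num.Theory.
Local Open Scope ring_scope.

Lemma nth_filter_iota a m c p : (a <= c < a + m)%N -> (p < m - 1)%N ->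
  nth 0%N [seq k <- iota a m | k != c] p = if (p + a < c)%N then (p + a)%N else (p + a + 1)%N.
Proof.
elim: m a p => [|m IH] a p /=; first lia.
move=> Hc Hp.
case: eqP => [Eac|Nac].
  subst c.
  have -> : [seq k <- iota a.+1 m | k != a] = iota a.+1 m.
    apply/all_filterP/allP => k; rewrite mem_iota; lia.
  rewrite nth_iota; last lia.
  have -> : (p + a < a)%N = false by lia.
  lia.
case: p Hp => [|p] Hp /=.
  have -> : (0 + a < c)%N = true by lia. by [].
rewrite IH; [|lia|lia].
have -> : (p + a.+1 = p.+1 + a)%N by lia.
by [].
Qed.

Lemma size_filter_iota a m c : (a <= c < a + m)%N ->
  size [seq k <- iota a m | k != c] = (m - 1)%N.
Proof.
elim: m a => [|m IH] a /=; first lia.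
move=> Hc.
case: eqP => [Eac|Nac].
  subst c.
  have -> : [seq k <- iota a.+1 m | k != a] = iota a.+1 m.
    apply/all_filterP/allP => k; rewrite mem_iota; lia.
  rewrite size_iota; lia.
rewrite /= IH; lia.
Qed.

Lemma nth_flatten_const T (x0 : T) (L : seq (seq T)) q b p :
  all (fun s => size s == q) L -> (p < q)%N ->
  nth x0 (flatten L) (b * q + p) = nth x0 (nth [::] L b) p.
Proof.
elim: L b => [|s L IH] b /=.
  by move=> _ _; rewrite !nth_nil.
move=> /andP[/eqP Hs HL] Hp.
rewrite nth_cat Hs.
case: b => [|b] /=.
  by rewrite mul0n add0n Hp.
have -> : (b.+1 * q + p < q)%N = false by rewrite mulSn; lia.
have -> : (b.+1 * q + p - q = b * q + p)%N by rewrite mulSn; lia.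
by rewrite IH.
Qed.

Definition kk (c t : nat) : nat := if (t < c)%N then (t + 2)%N else (t + 3)%N.
Definition rowlab (b p : nat) : nat * nat :=
  if b == 0%N then (2%N, (p + 3)%N) else ((b + 2)%N, if p == 0%N then (b + 2)%N else kk b p).

Lemma nth_Mrows q b p : (b <= q)%N -> (p < q)%N ->
  nth (0%N, 0%N) (Mrows q.+2) (b * q + p) = rowlab b p.
Proof.
move=> Hb Hp.
rewrite /Mrows !subSS !subn0.
set L := flatten _.
have -> : [seq (2%N, k) | k <- iota 3 q] ++ L = flatten ([seq (2%N, k) | k <- iota 3 q] ::
   [seq (i, i) :: [seq (i, k) | k <- iota 3 q & k != i] | i <- iota 3 q]) by [].
rewrite nth_flatten_const //; last first.
  rewrite /= size_map size_iota eqxx /=.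
  apply/allP => s /mapP [i]; rewrite mem_iota => Hi ->.
  rewrite /= size_map size_filter_iota; last lia.
  apply/eqP; lia.
rewrite /rowlab; case: b Hb => [|b] Hb /=.
  rewrite (nth_map 0%N); last by rewrite size_iota.
  rewrite nth_iota //; congr (_, _); lia.
rewrite (nth_map 0%N); last by rewrite size_iota; lia.
rewrite nth_iota; last lia.
case: p Hp => [|p] Hp /=.
  congr (_, _); lia.
rewrite (nth_map 0%N); last by rewrite size_filter_iota; lia.
rewrite nth_filter_iota; [|lia|lia].
rewrite /kk; congr (_, _); first lia.
case: ifP; case: ifP; lia.
Qed.

Lemma nth_Mcols q b p : (b <= q)%N -> (p < q)%N ->
  nth (0%N, 0%N) (Mcols q.+2) (b * q + p) = (kk b p, (b + 2)%N).
Proof.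
move=> Hb Hp.
rewrite /Mcols !subSS !subn0.
rewrite nth_flatten_const //; last first.
  apply/allP => s /mapP [i]; rewrite mem_iota => Hi ->.
  rewrite size_map size_filter_iota; last lia.
  apply/eqP; lia.
rewrite (nth_map 0%N); last by rewrite size_iota; lia.
rewrite nth_iota; last lia.
rewrite (nth_map 0%N); last by rewrite size_filter_iota; lia.
rewrite nth_filter_iota; [|lia|lia].
rewrite /kk; congr (_, _); last lia.
case: ifP; case: ifP; lia.
Qed.

Definition ent (b p c t : nat) : int :=
  if b == 0%N then
    (if c == 0%N then (if p == t then -1 else 0) else if t == 0%N then 0 else 1)
  else if p == 0%N then
    (if c == 0%N then (if b != t.+1 then -1 else 0)
     else if t == 0%N then (if b == c then 1 else -1)
     else if (b != c) && ((b + 2)%N != kk c t) then -1 else 0)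
  else (if c == 0%N then 0 else if t == 0%N then (if b == c then 1 else 0)
        else if (b == c) && (p == t) then -1 else 0).

Lemma ent_ok b p c t :
  f_fun (rowlab b p).1 (rowlab b p).2 (cyc3 (kk c t) (c + 2)) = ent b p c t.
Proof.

rewrite /f_fun /rowlab /cyc3 /ent /kk.
repeat (case: ifP => /=); move=> *; lia.
Qed.

Lemma sum_blk N q c (F : nat -> int) : N = (q.+1 * q)%N -> (c <= q)%N ->
  \sum_(l < N | (l %/ q)%N == c) F l = \sum_(t < q) F (c * q + t)%N.
Proof.
move=> -> Hc.
case: q Hc F => [|q] Hc F.
  by rewrite !big_ord0.
rewrite big_mkcond /= -(big_mkord xpredT (fun l => if (l %/ q.+1)%N == c then F l else 0)).
rewrite (big_cat_nat _ (n := (c * q.+1)%N)) /=; [|lia|nia].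
rewrite [X in _ + X](big_cat_nat _ (n := (c * q.+1 + q.+1)%N)) /=; [|lia|]; last by rewrite addnC -mulSn leq_mul2r; apply/orP; right; lia.
rewrite [X in X + _]big_nat_cond big1 ?add0r; last first.
  move=> l /andP[/andP[_ Hl] _]; case: eqP => // E; nia.
rewrite [X in _ + X]big_nat_cond [X in _ + X]big1 ?addr0; last first.
  move=> l /andP[/andP[Hl1 Hl] _]; case: eqP => // E; nia.
rewrite -{1}[(c * q.+1)%N]add0n big_addn.
have -> : (c * q.+1 + q.+1 - c * q.+1 = q.+1)%N by lia.
rewrite big_mkord; apply: eq_bigr => t _.
have -> : ((t + c * q.+1) %/ q.+1 == c)%N = true by have := ltn_ord t; move=> ?; apply/eqP; nia.
by rewrite addnC.
Qed.

Lemma det_conj m n (E : m = n) (h : 'I_m -> 'I_n) (hi : injective h) (A : 'M[int]_n) :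
  \det (\matrix_(i, j) A (h i) (h j)) = \det A.
Proof.
subst n.
pose s := perm hi.
have -> : \matrix_(i, j) A (h i) (h j) = row_perm s (col_perm s A).
  by apply/matrixP => i j; rewrite !mxE !permE.
rewrite row_permE col_permE !det_mulmx !det_perm odd_permV.
by rewrite mulrCA -expr2 sqrr_sign mulr1.
Qed.

Lemma det_1J k (c : int) :
  \det (1%:M + c *: const_mx 1 : 'M[int]_k) = 1 + c * k%:R.
Proof.
pose u : 'cV[int]_k := const_mx 1.
pose v : 'rV[int]_k := const_mx c.
have Huv : u *m v = c *: const_mx 1.
  apply/matrixP => i j; rewrite !mxE big_ord1 !mxE; ring.
have Hvu : v *m u = (c * k%:R)%:M.
  apply/matrixP => i j; rewrite !ord1 !mxE /= mulr1n.
  under eq_bigr do rewrite !mxE mulr1.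
  by rewrite sumr_const card_ord mulr_natr.
have E1 : block_mx (1%:M : 'M_k) (- u) v (1%:M : 'M_1) =
   block_mx 1%:M 0 v 1%:M *m block_mx 1%:M (-u) 0 (1%:M + v *m u).
  rewrite mulmx_block ?mul1mx ?mulmx1 ?mul0mx ?mulmx0 ?addr0 ?add0r mulmxN.
  by rewrite addrC addrK.
have E2 : block_mx (1%:M : 'M_k) (- u) v (1%:M : 'M_1) =
   block_mx (1%:M + u *m v) (-u) 0 1%:M *m block_mx 1%:M 0 v 1%:M.
  rewrite mulmx_block ?mul1mx ?mulmx1 ?mul0mx ?mulmx0 ?addr0 ?add0r mulNmx.
  by rewrite addrK.
have H1 := congr1 determinant E1; have H2 := congr1 determinant E2.
rewrite !det_mulmx det_ublock det_lblock !det1 !mul1r in H1.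
rewrite !det_mulmx det_ublock det_lblock !det1 !mulr1 in H2.
rewrite -Huv -H2 H1 Hvu det_mx11 !mxE /= !mulr1n; by [].
Qed.

Notation Nq q := ((q.+2 - 1) * (q.+2 - 2))%N.

Lemma Mn_entry q (a j : 'I_(Nq q)) :
  Mn q.+2 a j = ent (a %/ q) (a %% q) (j %/ q) (j %% q).
Proof.
have Ha := ltn_ord a; have Hj := ltn_ord j.
have Hq : (0 < q)%N by lia.
rewrite mxE /=.
have -> : nth (0%N, 0%N) (Mrows q.+2) a = rowlab (a %/ q) (a %% q).
  by rewrite {1}(divn_eq a q) nth_Mrows; [|nia|nia].
have -> : nth (0%N, 0%N) (Mcols q.+2) j = (kk (j %/ q) (j %% q), (j %/ q + 2)%N).
  by rewrite {1}(divn_eq j q) nth_Mcols; [|nia|nia].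
by rewrite /= ent_ok.
Qed.

Definition C1 q : 'M[int]_(Nq q) := \matrix_(l, j)
  (if ((j %% q == 0) && (j %/ q != 0))%N then (if (l %/ q == j %/ q)%N then 1 else 0)
   else (if l == j then 1 else 0)).

Lemma det_C1 q : \det (C1 q) = 1.
Proof.
rewrite det_trig.
  by apply: big1 => i _; rewrite mxE !eqxx; case: ifP.
apply/is_trig_mxP => i j Hij; rewrite mxE.
case: ifP => [/andP[/eqP H1 H2]|_].
  case: eqP => // E.
  have Hq : (0 < q)%N by have := ltn_ord j; lia.
  nia.
by case: eqP => // E; move: Hij; rewrite E ltnn.
Qed.

Lemma Mp_entry q (a j : 'I_(Nq q)) :
  (Mn q.+2 *m C1 q) a j =
  if ((j %% q == 0) && (j %/ q != 0))%N then \sum_(t < q) ent (a %/ q) (a %% q) (j %/ q) t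
  else ent (a %/ q) (a %% q) (j %/ q) (j %% q).
Proof.
have Hj := ltn_ord j.
have Hq : (0 < q)%N by lia.
rewrite mxE.
case: ifP => Hc.
  rewrite (eq_bigr (fun l : 'I_(Nq q) => if (l %/ q == j %/ q)%N then Mn q.+2 a l else 0)); last first.
    by move=> l _; rewrite [C1 q l j]mxE Hc; case: ifP => _; rewrite ?mulr1 ?mulr0.
  rewrite -big_mkcond /=.
  under eq_bigr do rewrite Mn_entry.
  rewrite (@sum_blk _ q (j %/ q) (fun l => ent (a %/ q) (a %% q) (l %/ q) (l %% q))); [|lia|nia].
  apply: eq_bigr => t _; have := ltn_ord t => Ht.
  congr ent; [by rewrite divnMDl // (divn_small Ht) addn0 | by rewrite modnMDl (modn_small Ht)].
rewrite (bigD1 j) //= [C1 q j j]mxE Hc eqxx mulr1 big1 ?addr0; first by rewrite Mn_entry.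
by move=> l /negbTE Hl; rewrite [C1 q l j]mxE Hc Hl mulr0.
Qed.

Lemma sum_delta m i0 (x : int) : (i0 < m)%N ->
  \sum_(i < m) (if (i : nat) == i0 then x else 0) = x.
Proof.
move=> Hi.
rewrite (bigD1 (Ordinal Hi)) //= eqxx big1 ?addr0 // => i Hne.
case: eqP => // E; exfalso; move: Hne; apply/negP; rewrite negbK; apply/eqP/val_inj; exact E.
Qed.

Lemma sum_ent m b p c : (0 < c <= m.+1)%N -> (b <= m.+1)%N -> (p <= m)%N ->
  \sum_(t < m.+1) ent b p c t =
  if b == 0%N then m%:R else if p == 0%N then (if b == c then 1 else - m%:R) else 0.
Proof.
move=> Hc Hb Hp.
rewrite big_ord_recl /=.
have Hc0 : (c == 0%N) = false by lia.
case: (eqVneq b 0%N) => [->|Hb0].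
  rewrite /ent /= Hc0 add0r.
  under eq_bigr do rewrite /bump /=.
  by rewrite sumr_const card_ord.
case: (eqVneq p 0%N) => [->|Hp0].
  case: (eqVneq b c) => [<-|Hbc].
    rewrite /ent (negbTE Hb0) /= eqxx big1 ?addr0 // => i _.
  pose i0 := if (b < c)%N then (b - 1)%N else (b - 2)%N.
  rewrite (eq_bigr (fun i : 'I_m => -1 + (if (i : nat) == i0 then 1 else 0))); last first.
    move=> i _; rewrite /ent (negbTE Hb0) /= Hc0 (negbTE Hbc) /= /bump /= /kk /i0.
    have := ltn_ord i => Hi.
    repeat (case: ifP => /=); move=> *; lia.
  rewrite big_split /= sum_delta; last by rewrite /i0; case: ifP; lia.
  rewrite sumr_const card_ord /ent (negbTE Hb0) Hc0 (negbTE Hbc) /=.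
  by rewrite -mulNrn addrCA addNr addr0.
rewrite (eq_bigr (fun i : 'I_m => if (i : nat) == (p - 1)%N then (if b == c then -1 else 0) else 0)); last first.
  move=> i _; rewrite /ent (negbTE Hb0) (negbTE Hp0) Hc0 /= /bump /=.
  repeat (case: ifP => /=); move=> *; lia.
rewrite sum_delta; last lia.
rewrite /ent (negbTE Hb0) (negbTE Hp0) Hc0 /=.
by case: ifP; rewrite ?addrN ?addr0.
Qed.

Definition hn m x : nat :=
  if (x < m.+1)%N then x
  else if (x < m.+1 + m.+1)%N then ((x - m.+1 + 1) * m.+1)%N
  else (((x - m.+1 - m.+1) %/ m + 1) * m.+1 + (x - m.+1 - m.+1) %% m + 1)%N.

Lemma h_div m x : (x < m.+1 + m.+1 + m.+1 * m)%N ->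
  ((hn m x %/ m.+1)%N, (hn m x %% m.+1)%N) =
  if (x < m.+1)%N then (0%N, x)
  else if (x < m.+1 + m.+1)%N then ((x - m.+1 + 1)%N, 0%N)
  else (((x - m.+1 - m.+1) %/ m + 1)%N, ((x - m.+1 - m.+1) %% m + 1)%N).
Proof.
move=> Hx; rewrite /hn.
case: ifP => H1.
  by rewrite divn_small // modn_small.
case: ifP => H2.
  by rewrite mulnK // modnMl.
have Hm : (0 < m)%N by case: (m) Hx H1 H2 => //; rewrite muln0 addn0 => ->.
have Hr : ((x - m.+1 - m.+1) %% m + 1 < m.+1)%N by have := ltn_pmod (x - m.+1 - m.+1) Hm; lia.
by rewrite -addnA divnMDl // (divn_small Hr) addn0 modnMDl (modn_small Hr).
Qed.

Lemma h_lt m x : (x < m.+1 + m.+1 + m.+1 * m)%N -> (hn m x < Nq m.+1)%N.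
Proof.
move=> Hx.
have E := @h_div m x Hx.
have : (hn m x %/ m.+1 < m.+2)%N.
  move: E; case: ifP => H1; first by case=> ->.
  case: ifP => H2; first by case=> ->; lia.
  case=> -> _.
  have Hm : (0 < m)%N by case: (m) Hx H1 H2 => //; rewrite muln0 addn0 => ->.
  have : ((x - m.+1 - m.+1) %/ m < m.+1)%N by rewrite ltn_divLR //; lia.
  lia.
rewrite ltn_divLR // => H.
Qed.

Lemma h_inj m x y : (x < m.+1 + m.+1 + m.+1 * m)%N -> (y < m.+1 + m.+1 + m.+1 * m)%N ->
  hn m x = hn m y -> x = y.
Proof.
move=> Hx Hy E.
have Ex := @h_div m x Hx; have Ey := @h_div m y Hy.
rewrite E Ey in Ex.
move: Ex.
case: ifP => H1; case: ifP => H2; try case: ifP => H3; try case: ifP => H4;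
  move=> P; move: (congr1 fst P) (congr1 snd P) => /= A B; try lia.
Qed.

Definition blk m x : nat :=
  if (x < m.+1)%N then 0%N else if (x < m.+1 + m.+1)%N then (x - m.+1 + 1)%N
  else ((x - m.+1 - m.+1) %/ m + 1)%N.
Definition pos m x : nat :=
  if (x < m.+1)%N then x else if (x < m.+1 + m.+1)%N then 0%N
  else ((x - m.+1 - m.+1) %% m + 1)%N.

Lemma blk_pos m x : (x < m.+1 + m.+1 + m.+1 * m)%N ->
  (hn m x %/ m.+1)%N = blk m x /\ (hn m x %% m.+1)%N = pos m x.
Proof.
move=> Hx; have := @h_div m x Hx; rewrite /blk /pos.
case: ifP => _; [|case: ifP => _]; move=> P; move: (congr1 fst P) (congr1 snd P) => /= -> ->; by [].
Qed.

Lemma blk_le m x : (x < m.+1 + m.+1 + m.+1 * m)%N -> (blk m x <= m.+1)%N /\ (pos m x <= m)%N.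
Proof.
move=> Hx; rewrite /blk /pos.
case: ifP => H1; first lia.
case: ifP => H2; first lia.
have Hm : (0 < m)%N by case: (m) Hx H1 H2 => //; rewrite muln0 addn0 => ->.
have : ((x - m.+1 - m.+1) %/ m < m.+1)%N by rewrite ltn_divLR //; lia.
have := ltn_pmod (x - m.+1 - m.+1) Hm.
lia.
Qed.

Definition SS m := (m.+1 + m.+1 + m.+1 * m)%N.

Definition hord m (x : 'I_(SS m)) : 'I_(Nq m.+1) := Ordinal (@h_lt m x (ltn_ord x)).

Lemma hord_inj m : injective (@hord m).
Proof.
move=> x y E; apply: val_inj; apply: (@h_inj m x y (ltn_ord x) (ltn_ord y)).
exact: (congr1 val E).
Qed.

Definition Bm m : 'M[int]_(SS m) :=
  \matrix_(x, y) (Mn m.+3 *m C1 m.+1) (hord m x) (hord m y).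

Lemma det_Bm m : \det (Bm m) = \det (Mn m.+3).
Proof.
rewrite /Bm det_conj; last exact: (@hord_inj m).
  by rewrite det_mulmx det_C1 mulr1.
rewrite /SS /=; lia.
Qed.

Definition entp m (b p c t : nat) : int :=
  if (t == 0%N) && (c != 0%N) then
    (if b == 0%N then m%:R else if p == 0%N then (if b == c then 1 else - m%:R) else 0)
  else ent b p c t.

Lemma Bm_entry m (x y : 'I_(SS m)) :
  Bm m x y = entp m (blk m x) (pos m x) (blk m y) (pos m y).
Proof.
have Hx := ltn_ord x; have Hy := ltn_ord y.
rewrite /Bm mxE Mp_entry /=.
have [-> ->] := @blk_pos m x Hx; have [-> ->] := @blk_pos m y Hy.
rewrite /entp.
case: ifP => H; last by [].
have [Hbx Hpx] := @blk_le m x Hx; have [Hby Hpy] := @blk_le m y Hy.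
rewrite sum_ent //. 
move/andP: H => [_ H]; lia.
Qed.

Lemma Bm_dl m : dlsubmx (Bm m : 'M_((m.+1 + m.+1) + m.+1 * m)) = 0.
Proof.
apply/matrixP => i j; rewrite mxE mxE Bm_entry [RHS]mxE.
have Hi := ltn_ord i; have Hj := ltn_ord j.
rewrite /entp /ent /blk /pos /=.
repeat (case: ifP => /=); move=> *; try lia.
Qed.

Lemma bp3 m i : blk m (m.+1 + m.+1 + i) = (i %/ m).+1 /\ pos m (m.+1 + m.+1 + i) = (i %% m).+1.
Proof.
rewrite /blk /pos.
have -> : (m.+1 + m.+1 + i < m.+1)%N = false by lia.
have -> : (m.+1 + m.+1 + i < m.+1 + m.+1)%N = false by lia.
have -> : (m.+1 + m.+1 + i - m.+1 - m.+1 = i)%N by lia.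
by rewrite !addn1.
Qed.

Lemma Bm_dr m : drsubmx (Bm m : 'M_((m.+1 + m.+1) + m.+1 * m)) = (-1)%:M.
Proof.
apply/matrixP => i j; rewrite mxE mxE Bm_entry [RHS]mxE /=.
have [-> ->] := bp3 m i; have [-> ->] := bp3 m j.
rewrite /entp /ent /=.
case: (eqVneq i j) => [->|Hij] /=; first by rewrite !eqxx.
have Hij' : (i : nat) != j by [].
rewrite mulr0n.
case: ifP => // /andP[/eqP H1 /eqP H2].
exfalso; move/eqP: Hij'; apply.
case: H1 => H1; case: H2 => H2.
by rewrite (divn_eq i m) (divn_eq j m) H1 H2.
Qed.

Lemma bp1 m x : (x < m.+1)%N -> blk m x = 0%N /\ pos m x = x.
Proof. by move=> H; rewrite /blk /pos H. Qed.

Lemma bp2 m x : (m.+1 <= x < m.+1 + m.+1)%N -> blk m x = (x - m.+1).+1 /\ pos m x = 0%N.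
Proof.
move=> /andP[H1 H2]; rewrite /blk /pos H2.
have -> : (x < m.+1)%N = false by lia.
by rewrite addn1.
Qed.

Lemma bp2' m x : (x < m.+1)%N -> blk m (m.+1 + x) = x.+1 /\ pos m (m.+1 + x) = 0%N.
Proof. move=> H; have [-> ->] := @bp2 m (m.+1 + x) (ltac:(lia)); by rewrite addKn. Qed.

Lemma Bm_ul m : ulsubmx (Bm m : 'M_((m.+1 + m.+1) + m.+1 * m)) =
  block_mx (-1)%:M (m%:R *: const_mx 1) (1%:M - const_mx 1) (m.+1%:R%:M - m%:R *: const_mx 1).
Proof.
apply/matrixP => i j; rewrite mxE mxE Bm_entry /=.
rewrite !mxE.
have Hi := ltn_ord i; have Hj := ltn_ord j.
case: splitP => i' Ei; rewrite !mxE; case: splitP => j' Ej; rewrite !mxE;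
  have Hi' := ltn_ord i'; have Hj' := ltn_ord j'.
- have [-> ->] : blk m i = 0%N /\ pos m i = i' by rewrite Ei; apply: bp1.
  have [-> ->] : blk m j = 0%N /\ pos m j = j' by rewrite Ej; apply: bp1.
  rewrite /entp /ent /= andbF.
  case: (eqVneq i' j') => [->|H]; first by rewrite eqxx.
  have H' : ((i' : nat) == j') = false by apply/negbTE.
  by rewrite H' mulr0n.
- have [-> ->] : blk m i = 0%N /\ pos m i = i' by rewrite Ei; apply: bp1.
  have [-> ->] : blk m j = j'.+1 /\ pos m j = 0%N by rewrite Ej; apply: bp2'.
  by rewrite /entp /= mulr1.
- have [-> ->] : blk m i = i'.+1 /\ pos m i = 0%N by rewrite Ei; apply: bp2'.
  have [-> ->] : blk m j = 0%N /\ pos m j = j' by rewrite Ej; apply: bp1.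
  rewrite /entp /ent /= andbF /=.
  case: (eqVneq i' j') => [->|H]; first by rewrite eqxx /= subrr.
  have H' : ((i' : nat) == j') = false by apply/negbTE.
  by rewrite eqSS H' /= sub0r.
- have [-> ->] : blk m i = i'.+1 /\ pos m i = 0%N by rewrite Ei; apply: bp2'.
  have [-> ->] : blk m j = j'.+1 /\ pos m j = 0%N by rewrite Ej; apply: bp2'.
  rewrite /entp /= mulr1.
  case: (eqVneq i' j') => [->|H]; first by rewrite eqxx mulr1n -addn1 natrD addrAC subrr add0r.
  have H' : ((i' : nat) == j') = false by apply/negbTE.
  by rewrite eqSS H' mulr0n sub0r.
Qed.

Lemma JJ k : (const_mx 1 : 'M[int]_k) *m (const_mx 1 : 'M[int]_k) = k%:R *: const_mx 1.
Proof.
apply/matrixP => i j; rewrite !mxE.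
under eq_bigr do rewrite !mxE mulr1.
by rewrite sumr_const card_ord mulr1.
Qed.

Lemma det_S m :
  \det (block_mx (-1)%:M (m%:R *: const_mx 1) (1%:M - const_mx 1)
          (m.+1%:R%:M - m%:R *: const_mx 1) : 'M[int]_(m.+1 + m.+1))
  = (-1) ^+ m.+1 * (m.+1%:R ^+ m.+1 * (1 - m%:R * m.+1%:R)).
Proof.
set J := (const_mx 1 : 'M[int]_m.+1).
set S := block_mx _ _ _ _.
pose U : 'M[int]_(m.+1 + m.+1) := block_mx 1%:M (m%:R *: J) 0 1%:M.
have dU : \det U = 1 by rewrite det_ublock !det1 mulr1.
have E : S *m U = block_mx (-1)%:M 0 (1%:M - J) (m.+1%:R *: (1%:M + (- m%:R) *: J)).
  rewrite /S /U mulmx_block !mulmx0 !mulmx1 !addr0 mul_scalar_mx scaleN1r addNr.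
  congr block_mx.
  rewrite mulmxBl mul1mx -scalemxAr JJ scalerA scalerDr scale_scalar_mx mulr1.
  rewrite scalerA mulrN scaleNr addrC addrA subrK mulrC; by [].
have := congr1 determinant E; rewrite det_mulmx dU mulr1 => ->.
by rewrite det_lblock det_scalar detZ det_1J mulNr.
Qed.

Lemma detM m : \det (Mn m.+3) = (-1) ^+ m.+1 * (m.+1%:R ^+ m.+1 * (1 - m%:R * m.+1%:R)).
Proof.
rewrite -det_Bm.
have -> : Bm m = block_mx (ulsubmx (Bm m : 'M_((m.+1 + m.+1) + m.+1 * m)))
   (ursubmx (Bm m : 'M_((m.+1 + m.+1) + m.+1 * m)))
   (dlsubmx (Bm m : 'M_((m.+1 + m.+1) + m.+1 * m)))
   (drsubmx (Bm m : 'M_((m.+1 + m.+1) + m.+1 * m))) by rewrite submxK.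
rewrite Bm_dl Bm_dr det_ublock Bm_ul det_S det_scalar.
have -> : (-1) ^+ (m.+1 * m) = 1 :> int by rewrite -signr_odd oddM /= andNb.
by rewrite mulr1.
Qed.

Theorem lemma17 (n : nat) : (3 <= n)%N ->
  \det (Mn n) = (-1) ^+ (n - 3) * ((n - 2)%:Z) ^+ (n - 2)
                 * ((n%:Z) ^+ 2 - 5 * n%:Z + 5)
  /\ \det (Mn n) != 0.
Proof.
move=> Hn.
have [m ->] : exists m, n = m.+3 by exists (n - 3)%N; lia.
rewrite detM.
have -> : (m.+3 - 3 = m)%N by lia.
have -> : (m.+3 - 2 = m.+1)%N by lia.
have E : (-1) ^+ m.+1 * (m.+1%:R ^+ m.+1 * (1 - m%:R * m.+1%:R)) =
   (-1) ^+ m * (m.+1)%:Z ^+ m.+1 * (m.+3%:Z ^+ 2 - 5 * m.+3%:Z + 5) :> int.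
  rewrite exprS -!natz.
  set X := (m.+1%:R ^+ m.+1 : int).
  have -> : (m.+1%:R : int) = m%:R + 1 by rewrite -addn1 natrD.
  have -> : (m.+3%:R : int) = m%:R + 3 by rewrite -addn3 natrD.
  ring.
split; first exact: E.
rewrite E.
rewrite mulf_neq0 // ?mulf_neq0 // ?expf_neq0 // ?oppr_eq0 ?oner_eq0 //.
rewrite expr2; apply/eqP => H; nia.
Qed.
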